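(* Let $H$ be a Kekul\'ean hexagonal system and let $C,C'$ be Clar covers of $H$. Then $f(C)\subseteq f(C')$ if and only if every hexagon component of $C$ is a hexagon component of $C'$, and $C$ and $C'$ coincide on all edges of $H$ other than those lying on hexagon components of $C'$ (i.e. such an edge lies in $C$ iff it lies in $C'$).
   Context: A hexagonal system is a 2-connected finite plane graph in which every interior face is a regular hexagon of side length one; its hexagons are the boundaries of its interior faces; it is Kekul\'ean if it has a perfect matching. A Clar cover of $H$ is a spanning subgraph each of whose components is a hexagon of $H$ or a single edge. The resonance graph $R(H)$ has the perfect matchings of $H$ as vertices, two adjacent iff their symmetric difference is the edge set of a hexagon of $H$. For a Clar cover $C$, $f(C)$ denotes the subgraph of $R(H)$ induced by all perfect matchings $M$ of $H$ such that every hexagon component of $C$ is $M$-alternating and every single-edge component of $C$ belongs to $M$. *)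

(* Defs.v *)
(* Hexagonal systems are realised concretely inside the
   honeycomb lattice, coordinatised by the triangular lattice Z^2 (skew basis
   e1, e2 at 60 degrees, unit length).  Points p with p.1 - p.2 = 0 (mod 3) are
   hexagon centres; all other points are honeycomb vertices. *)
From HB Require Import structures.
From mathcomp Require Import all_boot all_order all_algebra finmap.
Set Implicit Arguments. Unset Strict Implicit. Unset Printing Implicit Defensive.
Import Order.TTheory GRing.Theory Num.Theory.
Local Open Scope ring_scope.
Local Open Scope fset_scope.

Definition pt := (int * int)%type.
(* an edge of the honeycomb, oriented canonically: first endpoint in class 1,
   second endpoint in class 2 (the honeycomb is bipartite) *)
Definition edge := (pt * pt)%type.

Definition center (p : pt) : bool := ((fst p - snd p) %% 3)%Z == 0.

Definition dirs : seq pt :=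
  [:: (1, 0); (0, 1); (-1, 1); (-1, 0); (0, -1); (1, -1)].

Definition hex_vertices (c : pt) : seq pt :=
  [seq ((fst c + fst d)%R, (snd c + snd d)%R) | d <- dirs].

Definition hex_edges (c : pt) : seq edge :=
  let v i := nth (0, 0) (hex_vertices c) i in
  [:: (v 0%N, v 1%N); (v 2%N, v 1%N); (v 2%N, v 3%N);
      (v 4%N, v 3%N); (v 4%N, v 5%N); (v 0%N, v 5%N)].

Definition cadj (c d : pt) : bool :=
  [&& center d, c != d & has (fun e => e \in hex_edges d) (hex_edges c)].

(* A hexagonal system is represented by its (finite) set S of hexagons (interior
   faces).  The graph is the union of these hexagons.  It is a hexagonal system
   (2-connected, every interior face a unit hexagon of the system) iff S is
   nonempty, edge-connected and has no holes: every lattice cell outside S can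
   be joined, through cells outside S, to a cell lying strictly to the right of
   all of S (i.e. lies in the unbounded face). *)
Definition hexsys (S : {fset pt}) : Prop :=
  [/\ S != fset0,
      (forall c, c \in S -> center c),
      (forall c d, c \in S -> d \in S ->
         exists p : seq pt, [/\ path cadj c p, last c p = d & all (fun x => x \in S) p]) &
      (forall c, center c -> c \notin S ->
         exists p : seq pt, [/\ path cadj c p, all (fun x => x \notin S) p &
                               forall d, d \in S -> fst d < fst (last c p)])].

Definition is_vert (S : {fset pt}) (v : pt) : Prop :=
  exists2 c, c \in S & v \in hex_vertices c.

Definition is_edge (S : {fset pt}) (e : edge) : Prop :=
  exists2 c, c \in S & e \in hex_edges c.

Definition incident (v : pt) (e : edge) : bool := (fst e == v) || (snd e == v).

Definition perfect_matching (S : {fset pt}) (M : {fset edge}) : Prop :=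
  (forall e, e \in M -> is_edge S e) /\
  (forall v, is_vert S v ->
     exists e, [/\ e \in M, incident v e &
                   forall e', e' \in M -> incident v e' -> e' = e]).

Definition kekulean (S : {fset pt}) : Prop := exists M, perfect_matching S M.

(* A Clar cover C is encoded by its hexagon components Hs (hexagons of H,
   given by their centres) and its single-edge components Es: these are
   pairwise vertex-disjoint and together cover every vertex of H. *)
Definition clar_cover (S : {fset pt}) (Hs : {fset pt}) (Es : {fset edge}) : Prop :=
  [/\ (forall h, h \in Hs -> h \in S),
      (forall e, e \in Es -> is_edge S e) &
      (forall v, is_vert S v ->
         (exists2 h, h \in Hs & v \in hex_vertices h) \/
         (exists2 e, e \in Es & incident v e))] /\
  [/\ (forall v h h', h \in Hs -> h' \in Hs ->
         v \in hex_vertices h -> v \in hex_vertices h' -> h = h'),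
      (forall v e e', e \in Es -> e' \in Es -> incident v e -> incident v e' -> e = e') &
      (forall v h e, h \in Hs -> e \in Es -> v \in hex_vertices h -> ~~ incident v e)].

Definition on_hexes (Hs : {fset pt}) (e : edge) : Prop :=
  exists2 h, h \in Hs & e \in hex_edges h.

Definition in_cover (Hs : {fset pt}) (Es : {fset edge}) (e : edge) : Prop :=
  e \in Es \/ on_hexes Hs e.

Definition alternating (M : {fset edge}) (h : pt) : Prop :=
  forall i : nat, (i < 6)%N ->
    (nth (0, 0, (0, 0)) (hex_edges h) i \in M) !=
    (nth (0, 0, (0, 0)) (hex_edges h) ((i.+1) %% 6) \in M).

Definition in_f (S : {fset pt}) (Hs : {fset pt}) (Es : {fset edge}) (M : {fset edge}) : Prop :=
  [/\ perfect_matching S M,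
      (forall h, h \in Hs -> alternating M h) &
      (forall e, e \in Es -> e \in M)].

(* Main.v *)
Require Import Defs.
From HB Require Import structures.
From mathcomp Require Import all_boot all_order all_algebra finmap zify.
Local Open Scope fset_scope.
Set Implicit Arguments. Unset Strict Implicit.

Definition E0 : edge := (0%R, 0%R, (0%R, 0%R)).
Definition ed (h : pt) (i : nat) : edge := nth E0 (hex_edges h) i.
Definition vx (h : pt) (i : nat) : pt := nth (0%R, 0%R) (hex_vertices h) i.
Definition par (b : bool) (h : pt) : seq edge :=
  if b then [:: ed h 0; ed h 2; ed h 4] else [:: ed h 1; ed h 3; ed h 5].

Ltac splitH := repeat match goal with
  | H : is_true (_ || _) |- _ => case/orP: H => H
  | H : is_true (_ && _) |- _ => case/andP: H => ? ?
  end.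

Ltac memcase := let H := fresh "H" in move=> H;
  repeat (rewrite inE in H; case/predU1P: H => [-> | H]); try (by rewrite in_nil in H); try (rewrite inE in H; move/eqP: H => ->).

Lemma L_ends h e : e \in hex_edges h -> e.1 \in hex_vertices h /\ e.2 \in hex_vertices h.
Proof.
case: h => x y; rewrite /hex_edges /=.
memcase; by split; rewrite /= !inE !eqxx ?orbT.
Qed.

Lemma L_inc_vert h e v : e \in hex_edges h -> incident v e -> v \in hex_vertices h.
Proof.
move=> /L_ends [H1 H2] /orP [] /eqP <- //.
Qed.

Lemma L_par_sub b h e : e \in par b h -> e \in hex_edges h.
Proof.
case: h => x y; case: b; rewrite /par /ed /hex_edges /=; memcase; by rewrite !inE !eqxx ?orbT.
Qed.

Lemma L_par_cov b h v : v \in hex_vertices h -> exists2 e, e \in par b h & incident v e.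
Proof.
case: h => x y; rewrite /hex_vertices /=; memcase;
 case: b; rewrite /par /ed /hex_edges /=.
all: first [ by exists (nth E0 (hex_edges (x,y)) 0); rewrite /incident /= ?inE ?eqxx ?orbT | by exists (nth E0 (hex_edges (x,y)) 1); rewrite /incident /= ?inE ?eqxx ?orbT | by exists (nth E0 (hex_edges (x,y)) 2); rewrite /incident /= ?inE ?eqxx ?orbT | by exists (nth E0 (hex_edges (x,y)) 3); rewrite /incident /= ?inE ?eqxx ?orbT | by exists (nth E0 (hex_edges (x,y)) 4); rewrite /incident /= ?inE ?eqxx ?orbT | by exists (nth E0 (hex_edges (x,y)) 5); rewrite /incident /= ?inE ?eqxx ?orbT ].
Qed.

Lemma L_par_uniq b h v e1 e2 : e1 \in par b h -> e2 \in par b h ->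
  incident v e1 -> incident v e2 -> e1 = e2.
Proof.
case: h => x y; case: v => v1 v2.
move=> H1 H2 I1 I2; move: H1 I1; case: b H2; rewrite /par /ed /= => H2; memcase;
move: H2 I2; memcase; rewrite /incident /= !xpair_eqE => I1 I2; splitH;
 first [ done | exfalso; lia ].
Qed.

Lemma L_adj1 i h : (i < 6)%N ->
  incident (vx h (i.+1 %% 6)) (ed h i) && incident (vx h (i.+1 %% 6)) (ed h (i.+1 %% 6)).
Proof.
case: h => x y; do 6?case: i => [|i] //; move=> _; by rewrite /incident /vx /ed /= !eqxx ?orbT.
Qed.

Lemma L_adj2 i h : (i < 6)%N -> ed h i != ed h (i.+1 %% 6).
Proof.
case: h => x y; do 6?case: i => [|i] //; move=> _;
 rewrite /ed /= !xpair_eqE; apply/negP => H; splitH; lia.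
Qed.

Lemma L_adj3 i h e : (i < 6)%N -> e \in hex_edges h -> incident (vx h (i.+1 %% 6)) e ->
  e = ed h i \/ e = ed h (i.+1 %% 6).
Proof.
case: h => x y; do 6?case: i => [|i] //; move=> _; rewrite /hex_edges /=; memcase;
 rewrite /incident /vx /ed /= !xpair_eqE => I; splitH;
 first [ by left | by right | exfalso; lia ].
Qed.

Lemma L_G7 h h' : ed h 0 \in hex_edges h' -> ed h 5 \in hex_edges h' -> h = h'.
Proof.
case: h => x y; case: h' => x' y'.
rewrite /ed /hex_edges /= !inE /= !xpair_eqE => H1 H2; splitH; congr pair; lia.
Qed.

Lemma L_v0 h : incident (vx h 0) (ed h 0) && incident (vx h 0) (ed h 5) && (ed h 0 != ed h 5).
Proof.
case: h => x y; rewrite /incident /vx /ed /= !eqxx ?orbT /= !xpair_eqE; apply/negP => H; splitH; lia.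
Qed.

Lemma L_vidx h v : v \in hex_vertices h -> exists2 i, (i < 6)%N & v = vx h (i.+1 %% 6).
Proof.
case: h => x y; rewrite /hex_vertices /=; memcase.
by exists 5%N. by exists 0%N. by exists 1%N. by exists 2%N. by exists 3%N. by exists 4%N.
Qed.

Lemma L_ed_mem h i : (i < 6)%N -> ed h i \in hex_edges h.
Proof. by move=> lt; rewrite /ed mem_nth //; case: h. Qed.

Lemma L_alt_local (M : {fset edge}) h :
 (forall v e e', v \in hex_vertices h -> e \in M -> e' \in M -> incident v e -> incident v e' -> e = e') ->
 (forall v, v \in hex_vertices h -> exists2 e, e \in M & (e \in hex_edges h) && incident v e) ->
 alternating M h.
Proof.
move=> U C i lti.
change ((ed h i \in M) != (ed h (i.+1 %% 6) \in M)).
have [Ia Ib] := andP (L_adj1 h lti).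
have wV : vx h (i.+1 %% 6) \in hex_vertices h by apply: (L_inc_vert (L_ed_mem h lti) Ia).
case Ha: (ed h i \in M); case Hb: (ed h (i.+1 %% 6) \in M) => //=.
  have E := U _ _ _ wV Ha Hb Ia Ib.
  by move: (L_adj2 h lti); rewrite E eqxx.
have [e eM /andP[eH eI]] := C _ wV.
by case: (L_adj3 lti eH eI) => E; subst e; rewrite eM in Ha Hb.
Qed.

Lemma L_alt_has (M : {fset edge}) h v : alternating M h -> v \in hex_vertices h ->
  exists2 e, e \in M & (e \in hex_edges h) && incident v e.
Proof.
move=> A /L_vidx [i lti ->].
have [Ia Ib] := andP (L_adj1 h lti).
have := A i lti; change ((ed h i \in M) != (ed h (i.+1 %% 6) \in M) -> 
  exists2 e, e \in M & (e \in hex_edges h) && incident (vx h (i.+1 %% 6)) e).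
case Ha: (ed h i \in M) => /=.
  by move=> _; exists (ed h i) => //; rewrite (L_ed_mem h lti) Ia.
have lt6 : (i.+1 %% 6 < 6)%N by rewrite ltn_mod.
move=> Hb; exists (ed h (i.+1 %% 6)) => //.
  by move: Hb; case: (_ \in M).
by rewrite (L_ed_mem h lt6) Ib.
Qed.

Definition Mg (Hs : {fset pt}) (Es : {fset edge}) (g : pt -> bool) : {fset edge} :=
  Es `|` seq_fset tt (flatten [seq par (g h) h | h <- Hs]).

Lemma MgP Hs Es g e : e \in Mg Hs Es g -> e \in Es \/ exists2 h, h \in Hs & e \in par (g h) h.
Proof.
rewrite in_fsetU seq_fsetE => /orP [|/flatten_mapP [h hH eP]]; first by left.
by right; exists h.
Qed.

Lemma Mg_Es Hs Es g e : e \in Es -> e \in Mg Hs Es g.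
Proof. by move=> H; rewrite in_fsetU H. Qed.

Lemma Mg_par Hs Es g h e : h \in Hs -> e \in par (g h) h -> e \in Mg Hs Es g.
Proof.
move=> hH eP; rewrite in_fsetU seq_fsetE; apply/orP; right.
by apply/flatten_mapP; exists h.
Qed.

Lemma Mg_uniq S Hs Es g : clar_cover S Hs Es ->
  forall v e e', e \in Mg Hs Es g -> e' \in Mg Hs Es g -> incident v e -> incident v e' -> e = e'.
Proof.
move=> [_ [D1 D2 D3]] v e e' /MgP [eE|[h hH eP]] /MgP [eE'|[h' hH' eP']] I I'.
- exact: D2 I I'.
- have vV := L_inc_vert (L_par_sub eP') I'.
  by move: (D3 v h' e hH' eE vV); rewrite I.
- have vV := L_inc_vert (L_par_sub eP) I.
  by move: (D3 v h e' hH eE' vV); rewrite I'.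
- have vV := L_inc_vert (L_par_sub eP) I.
  have vV' := L_inc_vert (L_par_sub eP') I'.
  have E := D1 v h h' hH hH' vV vV'; subst h'.
  exact: L_par_uniq eP eP' I I'.
Qed.

Lemma Mg_inf S Hs Es g : clar_cover S Hs Es -> in_f S Hs Es (Mg Hs Es g).
Proof.
move=> CC; have U := Mg_uniq (g:=g) CC.
case: CC => [[HS ES COV] [D1 D2 D3]].
split.
- split.
  + move=> e /MgP [eE|[h hH eP]]; first exact: ES.
    by exists h; [apply: HS | apply: L_par_sub eP].
  + move=> v vS; case: (COV v vS) => [[h hH vV]|[e eE I]].
    * have [e eP I] := L_par_cov (g h) vV.
      have eM := Mg_par Es (g:=g) hH eP.
      by exists e; split => // e' e'M I'; apply: U e'M eM I' I.
    * have eM := Mg_Es Hs g eE.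
      by exists e; split => // e' e'M I'; apply: U e'M eM I' I.
- move=> h hH; apply: L_alt_local.
    by move=> v e e' _; apply: U.
  move=> v vV; have [e eP I] := L_par_cov (g h) vV.
  by exists e; [apply: (Mg_par Es (g:=g) hH eP) | rewrite (L_par_sub eP) I].
- by move=> e; apply: Mg_Es.
Qed.

From Stdlib Require Import Classical.
Unset Implicit Arguments.

Theorem theorem3 (S : {fset pt}) (Hs : {fset pt}) (Es : {fset edge})
    (Hs' : {fset pt}) (Es' : {fset edge}) :
  hexsys S -> kekulean S ->
  clar_cover S Hs Es -> clar_cover S Hs' Es' ->
  ((forall M : {fset edge}, in_f S Hs Es M -> in_f S Hs' Es' M) <->
   ((forall h, h \in Hs -> h \in Hs') /\
    (forall e, is_edge S e -> ~ on_hexes Hs' e ->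
       (in_cover Hs Es e <-> in_cover Hs' Es' e)))).
Proof.
move=> _ _ CC CC'.
have CC0 := CC; have CC0' := CC'.
case: CC => [[HS ES COV] [D1 D2 D3]].
case: CC' => [[HS' ES' COV'] [D1' D2' D3']].
split.
- move=> F.
  have HA : forall h, h \in Hs -> h \in Hs'.
    move=> h hH.
    pose g1 := fun _ : pt => true.
    pose g2 := fun x : pt => x != h.
    have [F1a F1b F1c] := F _ (Mg_inf g1 CC0).
    have [F2a F2b F2c] := F _ (Mg_inf g2 CC0).
    have U1 := Mg_uniq (g:=g1) CC0.
    have U2 := Mg_uniq (g:=g2) CC0.
    have /andP [/andP [I0 I5] N05] := L_v0 h.
    have e0M : ed h 0 \in Mg Hs Es g1.
      by apply: (Mg_par Es (g:=g1) hH); rewrite /g1 /par inE eqxx.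
    have e5M : ed h 5 \in Mg Hs Es g2.
      by apply: (Mg_par Es (g:=g2) hH); rewrite /g2 eqxx /par !inE eqxx ?orbT.
    have lt0 : (0 < 6)%N by [].
    have v0V : vx h 0 \in hex_vertices h := L_inc_vert (L_ed_mem h lt0) I0.
    have v0S : is_vert S (vx h 0) by exists h => //; apply: HS.
    case: (COV' _ v0S) => [[h' hH' vV']|[e' eE' I']].
    + have [e eM /andP [eh eI]] := L_alt_has (F1b h' hH') vV'.
      have [f fM /andP [fh fI]] := L_alt_has (F2b h' hH') vV'.
      have E1 := U1 _ _ _ eM e0M eI I0; subst e.
      have E2 := U2 _ _ _ fM e5M fI I5; subst f.
      by rewrite (L_G7 eh fh).
    + have E1 := U1 _ _ _ (F1c _ eE') e0M I' I0.
      have E2 := U2 _ _ _ (F2c _ eE') e5M I' I5.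
      by move: N05; rewrite -E1 -E2 eqxx.
  split => // e eS nH'.
  pose g0 := fun _ : pt => true.
  have [F0a F0b F0c] := F _ (Mg_inf g0 CC0).
  have U0 := Mg_uniq (g:=g0) CC0.
  have I1 : incident e.1 e by rewrite /incident eqxx.
  have vS : is_vert S e.1.
    by case: eS => c cS ec; exists c => //; case: (L_ends ec).
  split.
  + case=> [eE|[h hH eh]]; last by case: nH'; exists h => //; apply: HA.
    have eM := Mg_Es Hs g0 eE.
    case: (COV' _ vS) => [[h' hH' vV']|[e' eE' I']].
    * have [f fM /andP [fh fI]] := L_alt_has (F0b h' hH') vV'.
      have E := U0 _ _ _ fM eM fI I1; subst f.
      by case: nH'; exists h'.
    * have E := U0 _ _ _ (F0c _ eE') eM I' I1; subst e'.
      by left.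
  + case=> [eE'|]; last by [].
    have eM := F0c _ eE'.
    case: (COV _ vS) => [[h hH vV]|[e' eE I']].
    * have [f fP fI] := L_par_cov (g0 h) vV.
      have fM := Mg_par Es (g:=g0) hH fP.
      have E := U0 _ _ _ fM eM fI I1; subst f.
      by right; exists h => //; apply: L_par_sub fP.
    * have E := U0 _ _ _ (Mg_Es Hs g0 eE) eM I' I1; subst e'.
      by left.
- move=> [Hsub Agree] M [[PMa PMb] Alt EsM].
  have nHE : forall e, e \in Es' -> ~ on_hexes Hs' e.
    move=> e eE [h hH eh].
    have := D3' e.1 h e hH eE (proj1 (L_ends eh)).
    by rewrite /incident eqxx.
  split.
  + by split.
  + move=> h' hH'.
    case hH: (h' \in Hs); first exact: Alt.
    apply: L_alt_local.
      move=> v e e' vV eM e'M I I'.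
      have vS : is_vert S v by exists h' => //; apply: HS'.
      have [e0 [_ _ U]] := PMb v vS.
      by rewrite (U _ eM I) (U _ e'M I').
    move=> v vV.
    have vS : is_vert S v by exists h' => //; apply: HS'.
    case: (COV _ vS) => [[h hH2 vV2]|[e eE I]].
      have E := D1' v h h' (Hsub _ hH2) hH' vV2 vV; subst h.
      by rewrite hH2 in hH.
    exists e; first exact: EsM.
    case: (classic (on_hexes Hs' e)) => [[h'' hH'' eh]|nO].
      have E := D1' v h'' h' hH'' hH' (L_inc_vert eh I) vV; subst h''.
      by rewrite eh I.
    have := (proj1 (Agree e (ES e eE) nO)) (or_introl eE).
    case=> [eE'|//].
    by move: (D3' v h' e hH' eE' vV); rewrite I.
  + move=> e eE'.
    have := (proj2 (Agree e (ES' e eE') (nHE e eE'))) (or_introl eE').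
    case=> [eE|[h hH eh]]; first exact: EsM.
    by case: (nHE e eE'); exists h => //; apply: Hsub.
Qed.
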